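(* Let $\mathbf{A}\in\mathbb{C}^{n\times n}$ be nonsingular, $\mathbf{b}\in\mathbb{C}^n$ nonzero, and $k\ge1$ such that $\dim\mathcal{K}_{k+1}(\mathbf{A},\mathbf{b})=k+1$. Then \[ \min_{0\leq j\leq k}\|\mathbf{A}^{-1}\mathbf{b}-\mathbf{x}_j^{\mathrm F}\|_2\;\leq\;\sqrt{k+1}\,\cdot\,\kappa(\mathbf{A})\,\cdot\,\|\mathbf{A}^{-1}\mathbf{b}-\mathbf{x}_k^{\mathrm G}\|_2, \] where $\kappa(\mathbf{A})=\|\mathbf{A}\|_2\|\mathbf{A}^{-1}\|_2$.
   Context: The Krylov subspace is $\mathcal{K}_k(\mathbf{A},\mathbf{b})=\operatorname{span}\{\mathbf{b},\mathbf{A}\mathbf{b},\dots,\mathbf{A}^{k-1}\mathbf{b}\}$. The Arnoldi algorithm produces an orthonormal basis $\mathbf{Q}_k=[\mathbf{q}_1,\dots,\mathbf{q}_k]$ of $\mathcal{K}_k(\mathbf{A},\mathbf{b})$ with $\mathbf{q}_1=\mathbf{b}/\|\mathbf{b}\|_2$, and a $(k+1)\times k$ upper Hessenberg matrix $\mathbf{H}_{k+1,k}$ (entries $h_{i,j}$, with $h_{j+1,j}>0$) satisfying $\mathbf{A}\mathbf{Q}_k=\mathbf{Q}_{k+1}\mathbf{H}_{k+1,k}$; $\mathbf{H}_k$ denotes $\mathbf{H}_{k+1,k}$ with its last row deleted. With $\mathbf{e}_1=[1,0,\dots,0]^{\mathsf T}$, the FOM and GMRES iterates (zero initial guess, $\mathbf{x}_0^{\mathrm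 F}=\mathbf{x}_0^{\mathrm G}=\mathbf{0}$) are, for $j\ge1$, $\mathbf{x}_j^{\mathrm F}=\|\mathbf{b}\|_2\mathbf{Q}_j\mathbf{H}_j^{-1}\mathbf{e}_1$ and $\mathbf{x}_j^{\mathrm G}=\|\mathbf{b}\|_2\mathbf{Q}_j\mathbf{H}_{j+1,j}^{\dagger}\mathbf{e}_1$ ($\dagger$ = pseudoinverse); equivalently $\mathbf{x}_j^{\mathrm G}$ minimizes $\|\mathbf{b}-\mathbf{A}\mathbf{x}\|_2$ over $\mathbf{x}\in\mathcal{K}_j(\mathbf{A},\mathbf{b})$. Convention: if $\mathbf{H}_j$ is singular, the FOM iterate $\mathbf{x}_j^{\mathrm F}$ is undefined and its error norm $\|\mathbf{A}^{-1}\mathbf{b}-\mathbf{x}_j^{\mathrm F}\|_2$ is defined to be $+\infty$. *)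

(* Defs.v *)
From HB Require Import structures.
From mathcomp Require Import all_boot all_order all_algebra.
From mathcomp Require Import complex.
From mathcomp Require Import classical_sets reals constructive_ereal.
Set Implicit Arguments. Unset Strict Implicit. Unset Printing Implicit Defensive.
Import Order.TTheory GRing.Theory Num.Theory.
Local Open Scope ring_scope.

Section Krylov.
Variable R : realType.
Local Notation C := R[i].

Definition cmod (z : C) : R := complex.Re `|z|.

Definition vnorm n (v : 'cV[C]_n) : R :=
  Num.sqrt (\sum_(i < n) cmod (v i 0) ^+ 2).

Definition cdot n (u v : 'cV[C]_n) : C := \sum_(i < n) (u i 0)^* * v i 0.

Definition opnorm m n (M : 'M[C]_(m, n)) : R :=
  sup [set vnorm (M *m x) | x in [set x : 'cV[C]_n | vnorm x = 1]].

Definition kappa n (A : 'M[C]_n) : R := opnorm A * opnorm (invmx A).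

(* Krylov matrix [b, Ab, ..., A^(j-1) b]; its column space is K_j(A,b) *)
Definition krylov_mx n (A : 'M[C]_n) (b : 'cV[C]_n) (j : nat) : 'M[C]_(n, j) :=
  \matrix_(i < n, l < j) ((A ^+ l) *m b) i 0.

Definition in_krylov n (A : 'M[C]_n) (b : 'cV[C]_n) (j : nat) (x : 'cV[C]_n) :=
  exists c : 'cV[C]_j, x = krylov_mx A b j *m c.

(* Arnoldi output after k steps (0-indexed): vectors q 0, ..., q k
   (= q_1, ..., q_{k+1} of the paper) and entries h i l
   (= h_{i+1,l+1}, i <= k, l < k) of the (k+1) x k upper Hessenberg matrix
   H_{k+1,k}, such that the q's are orthonormal, q 0 = b/||b||_2,
   the subdiagonal entries are (real) positive and A Q_k = Q_{k+1} H_{k+1,k}. *)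
Definition arnoldi n (A : 'M[C]_n) (b : 'cV[C]_n) (k : nat)
    (q : nat -> 'cV[C]_n) (h : nat -> nat -> C) : Prop :=
  [/\ q 0%N = (((vnorm b)%:C)%C)^-1 *: b,
      (forall i l, (i <= k)%N -> (l <= k)%N ->
          cdot (q i) (q l) = (i == l)%:R),
      (forall i l, (l < k)%N -> (l.+1 < i)%N -> h i l = 0),
      (forall l, (l < k)%N -> 0 < h l.+1 l) &
      (forall l, (l < k)%N -> A *m q l = \sum_(i < k.+1) h i l *: q i)].

Definition Qmx n (q : nat -> 'cV[C]_n) (j : nat) : 'M[C]_(n, j) :=
  \matrix_(i < n, l < j) q l i 0.

Definition Hmx (h : nat -> nat -> C) (j : nat) : 'M[C]_j :=
  \matrix_(i < j, l < j) h i l.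

Definition e1 (j : nat) : 'cV[C]_j := \col_(i < j) ((i == 0%N :> nat)%:R).

(* FOM iterate x_j^F = ||b||_2 Q_j H_j^-1 e_1 (meaningful when H_j is
   nonsingular); x_0^F = 0 *)
Definition fom_iterate n (b : 'cV[C]_n) (q : nat -> 'cV[C]_n)
    (h : nat -> nat -> C) (j : nat) : 'cV[C]_n :=
  ((vnorm b)%:C)%C *: (Qmx q j *m (invmx (Hmx h j) *m e1 j)).

Definition fom_err n (A : 'M[C]_n) (b : 'cV[C]_n) (q : nat -> 'cV[C]_n)
    (h : nat -> nat -> C) (j : nat) : \bar R :=
  if j == 0%N then (vnorm (invmx A *m b))%:E
  else if Hmx h j \in unitmx then
    (vnorm (invmx A *m b - fom_iterate b q h j))%:E
  else +oo%E.

Definition is_gmres_iterate n (A : 'M[C]_n) (b : 'cV[C]_n) (j : nat)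
    (x : 'cV[C]_n) : Prop :=
  in_krylov A b j x /\
  forall y, in_krylov A b j y -> vnorm (b - A *m x) <= vnorm (b - A *m y).

End Krylov.

(* Main.v *)
Require Import Defs.
From HB Require Import structures.
From mathcomp Require Import all_boot all_order all_algebra.
From mathcomp Require Import complex.
From mathcomp Require Import classical_sets reals constructive_ereal.
From mathcomp Require Import ring lra.
Import Order.TTheory GRing.Theory Num.Theory.
Local Open Scope ring_scope.
Set Implicit Arguments. Unset Strict Implicit. Unset Printing Implicit Defensive.


Lemma sum_sqr0 (R : rcfType) (I : finType) (a : I -> R) :
  \sum_i a i ^+ 2 = 0 -> forall i, a i = 0.
Proof.
move=> H i; apply/eqP; rewrite -sqrf_eq0; apply/eqP.
by apply: (psumr_eq0P _ H) => // j _; exact: sqr_ge0.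
Qed.

Lemma rcs (R : rcfType) (I : finType) (a b : I -> R) :
  \sum_i a i * b i <= Num.sqrt (\sum_i a i ^+ 2) * Num.sqrt (\sum_i b i ^+ 2).
Proof.
set A := \sum_i a i ^+ 2; set B := \sum_i b i ^+ 2; set S := \sum_i a i * b i.
have A0 : 0 <= A by apply: sumr_ge0 => i _; exact: sqr_ge0.
have B0 : 0 <= B by apply: sumr_ge0 => i _; exact: sqr_ge0.
have sA2 := sqr_sqrtr A0; have sB2 := sqr_sqrtr B0.
set sA := Num.sqrt A in sA2 *; set sB := Num.sqrt B in sB2 *.
have E1 : \sum_i 2 * (a i * sB) * (b i * sA) = 2 * (sA * sB * S).
  rewrite /S [sA * sB * _]mulr_sumr mulr_sumr; apply: eq_bigr => i _; ring.
have E2 : \sum_i ((a i * sB) ^+ 2 + (b i * sA) ^+ 2) = 2 * (sA * sB * (sA * sB)).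
  under eq_bigr do rewrite !exprMn.
  rewrite big_split /= -!mulr_suml -/A -/B.
  have -> : sA * sB * (sA * sB) = sA ^+ 2 * sB ^+ 2 by ring.
  rewrite sA2 sB2; ring.
have key : sA * sB * S <= sA * sB * (sA * sB).
  have : \sum_i 2 * (a i * sB) * (b i * sA) <=
         \sum_i ((a i * sB) ^+ 2 + (b i * sA) ^+ 2).
    apply: ler_sum => i _; set x := a i * sB; set y := b i * sA.
    have := sqr_ge0 (x - y); rewrite sqrrB; lra.
  rewrite E1 E2; lra.
have p0 : 0 <= sA * sB by apply: mulr_ge0; apply: sqrtr_ge0.
have [pos|] := ltrP 0 (sA * sB).
  by rewrite -(ler_pM2l pos).
move=> le0; have e0 : sA * sB = 0 by apply/eqP; rewrite eq_le le0 p0.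
have -> : S = 0.
  move/eqP: e0; rewrite mulf_eq0 => /orP[] /eqP e.
    have Ae : A = 0 by rewrite -sA2 e expr0n.
    by rewrite /S big1 // => i _; rewrite (sum_sqr0 Ae i) mul0r.
  have Be : B = 0 by rewrite -sB2 e expr0n.
  by rewrite /S big1 // => i _; rewrite (sum_sqr0 Be i) mulr0.
by rewrite e0.
Qed.

Section Basic.
Variable R : realType.
Local Notation C := R[i].

Lemma cmodE (z : C) : ((cmod z)%:C)%C = `|z|.
Proof. by rewrite /cmod normc_def. Qed.

Lemma cmod_ge0 (z : C) : 0 <= cmod z.
Proof. by rewrite -ler0c cmodE normr_ge0. Qed.

Lemma cmodM (x y : C) : cmod (x * y) = cmod x * cmod y.
Proof. by apply: complexI; rewrite rmorphM /= !cmodE normrM. Qed.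

Lemma cmodJ (x : C) : cmod (x^*) = cmod x.
Proof. by apply: complexI; rewrite !cmodE norm_conjC. Qed.


Lemma cmod_sum I (r : seq I) (F : I -> C) :
  cmod (\sum_(i <- r) F i) <= \sum_(i <- r) cmod (F i).
Proof.
have H := ler_norm_sum r F xpredT.
under eq_bigr do rewrite -cmodE in H.
rewrite -cmodE -rmorph_sum lecR in H.
exact: H.
Qed.

Lemma cmod_sqr (z : C) : (((cmod z) ^+ 2)%:C)%C = z^* * z.
Proof. by rewrite rmorphXn /= cmodE normCK mulrC. Qed.

Lemma cmod0 : cmod (0 : C) = 0.
Proof. by apply: complexI; rewrite cmodE normr0. Qed.

Lemma cmod_eq0 (z : C) : (cmod z == 0) = (z == 0).
Proof. by rewrite -(inj_eq (@complexI _)) cmodE /= normr_eq0. Qed.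

Lemma vnorm_ge0 m (v : 'cV[C]_m) : 0 <= vnorm v.
Proof. exact: sqrtr_ge0. Qed.

Lemma vnorm_sqr m (v : 'cV[C]_m) : vnorm v ^+ 2 = \sum_i cmod (v i 0) ^+ 2.
Proof. by rewrite sqr_sqrtr // sumr_ge0 // => i _; exact: sqr_ge0. Qed.

Lemma cdot_vv m (v : 'cV[C]_m) : cdot v v = ((vnorm v ^+ 2)%:C)%C.
Proof.
rewrite vnorm_sqr rmorph_sum /cdot /=; apply: eq_bigr => i _.
by rewrite cmod_sqr.
Qed.

Lemma vnorm_cdot m (v : 'cV[C]_m) (a : R) :
  0 <= a -> cdot v v = ((a ^+ 2)%:C)%C -> vnorm v = a.
Proof.
move=> a0; rewrite cdot_vv => /complexI => H; apply/eqP; rewrite -(@eqrXn2 _ 2) // ?vnorm_ge0; exact/eqP.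
Qed.

Lemma cdotDr m (u v w : 'cV[C]_m) : cdot u (v + w) = cdot u v + cdot u w.
Proof. by rewrite /cdot -big_split; apply: eq_bigr => i _; rewrite mxE mulrDr. Qed.

Lemma cdotNr m (u v : 'cV[C]_m) : cdot u (- v) = - cdot u v.
Proof. by rewrite /cdot -sumrN; apply: eq_bigr => i _; rewrite mxE mulrN. Qed.

Lemma cdotBr m (u v w : 'cV[C]_m) : cdot u (v - w) = cdot u v - cdot u w.
Proof. by rewrite cdotDr cdotNr. Qed.

Lemma cdotZr m (u v : 'cV[C]_m) a : cdot u (a *: v) = a * cdot u v.
Proof. by rewrite /cdot mulr_sumr; apply: eq_bigr => i _; rewrite mxE mulrCA. Qed.

Lemma cdotZl m (u v : 'cV[C]_m) a : cdot (a *: u) v = a^* * cdot u v.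
Proof. by rewrite /cdot mulr_sumr; apply: eq_bigr => i _; rewrite mxE rmorphM mulrA. Qed.

Lemma cdot0r m (u : 'cV[C]_m) : cdot u 0 = 0.
Proof. by rewrite /cdot big1 // => i _; rewrite mxE mulr0. Qed.

Lemma cdot_sumr m (u : 'cV[C]_m) I (r : seq I) (P : pred I) (F : I -> 'cV[C]_m) :
  cdot u (\sum_(i <- r | P i) F i) = \sum_(i <- r | P i) cdot u (F i).
Proof.
elim/big_rec2: _ => [|i y1 y2 _ <-]; first by rewrite cdot0r.
by rewrite cdotDr.
Qed.

Lemma cdot0l m (u : 'cV[C]_m) : cdot 0 u = 0.
Proof. by rewrite /cdot big1 // => i _; rewrite mxE rmorph0 mul0r. Qed.

Lemma cdotDl m (u v w : 'cV[C]_m) : cdot (v + w) u = cdot v u + cdot w u.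
Proof. by rewrite /cdot -big_split; apply: eq_bigr => i _; rewrite mxE rmorphD mulrDl. Qed.

Lemma cdot_suml m (u : 'cV[C]_m) I (r : seq I) (P : pred I) (F : I -> 'cV[C]_m) :
  cdot (\sum_(i <- r | P i) F i) u = \sum_(i <- r | P i) cdot (F i) u.
Proof.
elim/big_rec2: _ => [|i y1 y2 _ <-]; first by rewrite cdot0l.
by rewrite cdotDl.
Qed.

Lemma vnormZ m (v : 'cV[C]_m) a : vnorm (a *: v) = cmod a * vnorm v.
Proof.
apply: vnorm_cdot; first by rewrite mulr_ge0 ?cmod_ge0 ?vnorm_ge0.
by rewrite cdotZl cdotZr cdot_vv mulrA -cmod_sqr -rmorphM /= exprMn.
Qed.

Lemma cs m (u v : 'cV[C]_m) : cmod (cdot u v) <= vnorm u * vnorm v.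
Proof.
apply: le_trans (cmod_sum _ _) _.
under eq_bigr do rewrite cmodM cmodJ.
rewrite /vnorm; exact: rcs.
Qed.

Lemma cmodR (r : R) : cmod ((r%:C)%C) = `|r|.
Proof. by rewrite /cmod normc_def /= expr0n /= addr0 sqrtr_sqr. Qed.

Lemma mulmx_cdot m p (M : 'M[C]_(m, p)) (x : 'cV[C]_p) i :
  (M *m x) i 0 = cdot (\col_j (M i j)^*) x.
Proof. by rewrite mxE /cdot; apply: eq_bigr => j _; rewrite mxE conjCK. Qed.

Lemma mx_bound m p (M : 'M[C]_(m, p)) : exists K, 0 <= K /\
  forall x, vnorm (M *m x) <= K * vnorm x.
Proof.
set K := Num.sqrt (\sum_i vnorm (\col_j (M i j)^*) ^+ 2).
exists K; split; first exact: sqrtr_ge0.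
move=> x.
have K0 : 0 <= K by exact: sqrtr_ge0.
rewrite -ler_sqr ?nnegrE ?vnorm_ge0 ?mulr_ge0 ?vnorm_ge0 //.
rewrite vnorm_sqr exprMn sqr_sqrtr; last by apply: sumr_ge0 => i _; exact: sqr_ge0.
rewrite mulr_suml; apply: ler_sum => i _.
rewrite mulmx_cdot -exprMn ler_sqr ?nnegrE ?cmod_ge0 ?mulr_ge0 ?vnorm_ge0 //.
exact: cs.
Qed.

Lemma opnorm_ub m p (M : 'M[C]_(m, p)) x : vnorm (M *m x) <= opnorm M * vnorm x.
Proof.
have [K [K0 HK]] := mx_bound M.
set S := [set vnorm (M *m y) | y in [set y : 'cV[C]_p | vnorm y = 1]]%classic.
have hub : has_ubound S.
  exists K => _ [y /= y1 <-]; by have := HK y; rewrite y1 mulr1.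
have [x0|xn0] := eqVneq (vnorm x) 0.
  by have := HK x; rewrite x0 !mulr0.
set c := (vnorm x)^-1.
have c0 : 0 <= c by rewrite invr_ge0 vnorm_ge0.
have Sy : S (vnorm (M *m ((c%:C)%C *: x))).
  exists ((c%:C)%C *: x) => //=.
  by rewrite vnormZ cmodR ger0_norm // mulVf.
have := ub_le_sup hub Sy.
rewrite -/(opnorm M) -scalemxAr vnormZ cmodR ger0_norm //.
move=> H; have vx0 : 0 < vnorm x by rewrite lt_def xn0 vnorm_ge0.
by rewrite -ler_pdivrMr // mulrC.
Qed.

Lemma opnorm_ge0 m p (M : 'M[C]_(m, p)) (u : 'cV[C]_p) : vnorm u = 1 -> 0 <= opnorm M.
Proof.
move=> u1; have := opnorm_ub M u; rewrite u1 mulr1; apply: le_trans; exact: vnorm_ge0.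
Qed.

End Basic.

Lemma trunc_sum (V : zmodType) (F : nat -> V) a b' : (a <= b')%N ->
  (forall i, (a <= i)%N -> (i < b')%N -> F i = 0) ->
  \sum_(i < b') F i = \sum_(i < a) F i.
Proof.
move=> ab H; rewrite -!(big_mkord xpredT F) (big_cat_nat _ (n:=a)) //=.
rewrite [X in _ + X]big_nat_cond [X in _ + X]big1 ?addr0 // => i /andP[/andP[ai ib] _].
exact: H.
Qed.

Lemma sum_delta (T : pzSemiRingType) (F : nat -> T) m i :
  \sum_(l < m) F l * (i == l :> nat)%:R = if (i < m)%N then F i else 0.
Proof.
elim: m => [|m IH]; first by rewrite big_ord0 ltn0.
rewrite big_ord_recr /= IH.
case: (ltngtP i m) => [lt|gt|->].
- by rewrite mulr0 addr0 ltnS (ltnW lt).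
- by rewrite mulr0 addr0 ltnS leqNgt gt.
- by rewrite mulr1 add0r ltnS leqnn.
Qed.

Section Arn.
Variable R : realType.
Local Notation C := R[i].
Variables (n : nat) (A : 'M[C]_n) (b : 'cV[C]_n) (k : nat)
  (q : nat -> 'cV[C]_n) (h : nat -> nat -> C).
Hypothesis arn : arnoldi A b k q h.
Hypothesis Aunit : A \in unitmx.

Local Notation beta := (vnorm b).

Lemma qon i l : (i <= k)%N -> (l <= k)%N -> cdot (q i) (q l) = (i == l)%:R.
Proof. by case: arn => _ H _ _ _; exact: H. Qed.

Lemma hzero i l : (l < k)%N -> (l.+1 < i)%N -> h i l = 0.
Proof. by case: arn => _ _ H _ _; exact: H. Qed.

Lemma hpos l : (l < k)%N -> 0 < h l.+1 l.
Proof. by case: arn => _ _ _ H _; exact: H. Qed.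

Lemma Aq l : (l < k)%N -> A *m q l = \sum_(i < k.+1) h i l *: q i.
Proof. by case: arn => _ _ _ _ H; exact: H. Qed.

Lemma vnorm_q i : (i <= k)%N -> vnorm (q i) = 1.
Proof.
move=> ik; apply: vnorm_cdot => //; by rewrite qon // eqxx expr1n.
Qed.

Lemma beta_gt0 : 0 < beta.
Proof.
rewrite lt_def vnorm_ge0 andbT; apply/negP => /eqP b0.
case: arn => q0 H _ _ _.
have := H 0%N 0%N (leq0n _) (leq0n _).
by rewrite q0 b0 invr0 scale0r cdot0l eqxx => /eqP; rewrite eq_sym oner_eq0.
Qed.

Lemma b_q0 : b = ((beta%:C)%C) *: q 0.
Proof.
case: arn => q0 _ _ _ _; rewrite q0 scalerA mulfV ?scale1r //.
apply/eqP => /(congr1 (@complex.Re _)) /= e; by move: beta_gt0; rewrite e ltxx.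
Qed.

Definition inspan m (x : 'cV[C]_n) :=
  exists s : nat -> C, x = \sum_(l < m) s l *: q l.

Lemma coef m (s : nat -> C) p : (m <= k.+1)%N -> (p <= k)%N ->
  cdot (q p) (\sum_(l < m) s l *: q l) = if (p < m)%N then s p else 0.
Proof.
move=> mk pk; rewrite cdot_sumr -sum_delta; apply: eq_bigr => l _.
rewrite cdotZr qon //; last by rewrite -ltnS (leq_trans (ltn_ord l)).
Qed.

Lemma expand m x : (m <= k.+1)%N -> inspan m x ->
  x = \sum_(l < m) cdot (q l) x *: q l.
Proof.
move=> mk [s ->]; apply: eq_bigr => l _; rewrite coef // ?ltn_ord //.
by rewrite -ltnS (leq_trans (ltn_ord l)).
Qed.

Lemma inspan0 m : inspan m 0.
Proof. by exists (fun _ => 0); rewrite big1 // => l _; rewrite scale0r. Qed.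

Lemma inspanD m x y : inspan m x -> inspan m y -> inspan m (x + y).
Proof.
move=> [s ->] [t ->]; exists (fun l => s l + t l).
by rewrite -big_split; apply: eq_bigr => l _; rewrite scalerDl.
Qed.

Lemma inspanZ m a x : inspan m x -> inspan m (a *: x).
Proof.
move=> [s ->]; exists (fun l => a * s l).
by rewrite scaler_sumr; apply: eq_bigr => l _; rewrite scalerA.
Qed.

Lemma inspanN m x : inspan m x -> inspan m (- x).
Proof. by move=> H; rewrite -scaleN1r; exact: inspanZ. Qed.

Lemma inspan_sum m I (r : seq I) (P : pred I) (F : I -> 'cV[C]_n) :
  (forall i, P i -> inspan m (F i)) -> inspan m (\sum_(i <- r | P i) F i).
Proof.
move=> H; elim/big_rec: _ => [|i x Pi Hx]; first exact: inspan0.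
by apply: inspanD => //; exact: H.
Qed.

Lemma inspan_mono m m' x : (m <= m')%N -> inspan m x -> inspan m' x.
Proof.
move=> mm [s ->]; exists (fun l => if (l < m)%N then s l else 0).
rewrite (@trunc_sum _ (fun l => (if (l < m)%N then s l else 0) *: q l) m m' mm).
  by apply: eq_bigr => l _; rewrite ltn_ord.
by move=> i mi _; rewrite ltnNge mi scale0r.
Qed.

Lemma inspan_q l m : (l < m)%N -> inspan m (q l).
Proof.
move=> lm; exists (fun i => (i == l)%:R).
rewrite (bigD1 (Ordinal lm)) //= eqxx scale1r big1 ?addr0 // => i /eqP il.
have -> : (i == l :> nat) = false.
  by apply/eqP => e; apply: il; exact: val_inj.
by rewrite scale0r.
Qed.

Lemma Aq_span l : (l < k)%N -> inspan l.+2 (A *m q l).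
Proof.
move=> lk; exists (fun i => h i l); rewrite Aq //.
apply: (@trunc_sum _ (fun i => h i l *: q i) l.+2 k.+1) => // i li _; rewrite hzero ?scale0r //.
Qed.

Lemma A_span m x : (m <= k)%N -> inspan m x -> inspan m.+1 (A *m x).
Proof.
move=> mk [s ->]; rewrite mulmx_sumr; apply: inspan_sum => l _.
rewrite -scalemxAr; apply: inspanZ; apply: (inspan_mono _ (Aq_span _)).
  exact: ltn_ord.
exact: leq_trans (ltn_ord l) mk.
Qed.

Lemma b_span : inspan 1 b.
Proof. by rewrite b_q0; apply: inspanZ; exact: inspan_q. Qed.

Lemma krylov_span l : (l <= k)%N -> inspan l.+1 (A ^+ l *m b).
Proof.
elim: l => [|l IH] lk; first by rewrite expr0 mul1mx; exact: b_span.
rewrite exprS -mulmxA; apply: A_span => //; exact: IH (ltnW lk).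
Qed.

Lemma krylov_mul m (c : 'cV[C]_m) :
  krylov_mx A b m *m c = \sum_(l < m) c l 0 *: (A ^+ l *m b).
Proof.
apply/matrixP => i j; rewrite !mxE summxE; apply: eq_bigr => l _.
by rewrite !mxE (ord1 j) mulrC.
Qed.

Lemma Qmx_mul m (y : 'cV[C]_m) : Qmx q m *m y = \sum_(l < m) y l 0 *: q l.
Proof.
apply/matrixP => i j; rewrite !mxE summxE; apply: eq_bigr => l _.
by rewrite !mxE (ord1 j) mulrC.
Qed.

Lemma krylov_inspan m x : (m <= k)%N -> in_krylov A b m x -> inspan m x.
Proof.
move=> mk [c ->]; rewrite krylov_mul; apply: inspan_sum => l _.
apply: inspanZ; apply: (inspan_mono (ltn_ord l)); apply: krylov_span.
exact: leq_trans (ltnW (ltn_ord l)) mk.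
Qed.

Lemma Qmx_inspan m (y : 'cV[C]_m) : inspan m (Qmx q m *m y).
Proof.
rewrite Qmx_mul; apply: inspan_sum => l _; apply: inspanZ; apply: inspan_q.
exact: ltn_ord.
Qed.

Fixpoint g (m : nat) : nat -> C :=
  match m with
  | 0 => fun i => (i == 0)%:R
  | m'.+1 => fun i => if i == m'.+1 then
        - (\sum_(p < m'.+1) g m' p * h p m') / h m'.+1 m' else g m' i
  end.

Lemma g_stable m l i : (l <= m)%N -> (i <= l)%N -> g m i = g l i.
Proof.
elim: m => [|m IH] lm il; first by move: lm; rewrite leqn0 => /eqP ->.
move: lm; rewrite leq_eqVlt => /orP[/eqP -> //|]; rewrite ltnS => lm.
rewrite /= ifF; first exact: IH.
by apply/negbTE; rewrite neq_ltn ltnS (leq_trans il lm).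
Qed.

Lemma g0 m : g m 0 = 1.
Proof. by elim: m => [|m IH] //=. Qed.

Lemma gsum l : (l < k)%N -> \sum_(i < l.+2) g l.+1 i * h i l = 0.
Proof.
move=> lk; rewrite big_ord_recr /= eqxx.
have -> : \sum_(i < l.+1) (if i == l.+1 :> nat then
     - (\sum_(p < l.+1) g l p * h p l) / h l.+1 l else g l i) * h i l
   = \sum_(i < l.+1) g l i * h i l.
  apply: eq_bigr => i _; rewrite ifF //; apply/negbTE.
  by rewrite neq_ltn ltn_ord.
rewrite divfK ?subrr //; exact: lt0r_neq0 (hpos lk).
Qed.

Definition V m := \sum_(i < m.+1) (g m i)^* *: q i.

Lemma cdotV m x : cdot (V m) x = \sum_(i < m.+1) g m i * cdot (q i) x.
Proof. by rewrite cdot_suml; apply: eq_bigr => i _; rewrite cdotZl conjCK. Qed.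

Lemma cdot_qAq i l : (i <= k)%N -> (l < k)%N -> cdot (q i) (A *m q l) = h i l.
Proof. by move=> ik lk; rewrite Aq // (coef (fun j => h j l)) // ltnS ik. Qed.

Lemma V_orth l m : (l < m)%N -> (m <= k)%N -> cdot (V m) (A *m q l) = 0.
Proof.
move=> lm mk; have lk := leq_trans lm mk.
rewrite cdotV.
have -> : \sum_(i < m.+1) g m i * cdot (q i) (A *m q l) =
          \sum_(i < m.+1) g m i * h i l.
  apply: eq_bigr => i _; rewrite cdot_qAq //.
  by rewrite -ltnS (leq_trans (ltn_ord i)).
rewrite (@trunc_sum _ (fun i => g m i * h i l) l.+2 m.+1) //.
  rewrite -[RHS](gsum lk); apply: eq_bigr => i _; rewrite (@g_stable m l.+1) //.
  by rewrite -ltnS ltn_ord.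
by move=> i li _; rewrite hzero ?mulr0.
Qed.

Lemma V_orthA m x : (m <= k)%N -> inspan m x -> cdot (V m) (A *m x) = 0.
Proof.
move=> mk [s ->]; rewrite mulmx_sumr cdot_sumr big1 // => l _.
by rewrite -scalemxAr cdotZr V_orth ?mulr0.
Qed.

Lemma V_q m p : (m <= k)%N -> (p <= m)%N -> cdot (V m) (q p) = g m p.
Proof.
move=> mk pm; rewrite cdotV.
have -> : \sum_(i < m.+1) g m i * cdot (q i) (q p) =
          \sum_(i < m.+1) g m i * (p == i :> nat)%:R.
  apply: eq_bigr => i _; rewrite qon ?(leq_trans pm) // 1?eq_sym //.
  by rewrite -ltnS (leq_trans (ltn_ord i)).
by rewrite sum_delta ltnS pm.
Qed.

Lemma V_b m : (m <= k)%N -> cdot (V m) b = (beta%:C)%C.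
Proof. by move=> mk; rewrite {1}b_q0 cdotZr V_q // g0 mulr1. Qed.

Lemma vnorm_V m : (m <= k)%N ->
  vnorm (V m) = Num.sqrt (\sum_(i < m.+1) cmod (g m i) ^+ 2).
Proof.
move=> mk; apply: vnorm_cdot; first exact: sqrtr_ge0.
rewrite sqr_sqrtr; last by apply: sumr_ge0 => i _; exact: sqr_ge0.
rewrite cdotV rmorph_sum /=; apply: eq_bigr => i _.
rewrite /V (coef (fun j => (g m j)^*)) //; last by rewrite -ltnS (leq_trans (ltn_ord i)).
by rewrite ltn_ord cmod_sqr mulrC.
Qed.

Lemma onedim m z : (m < k)%N -> inspan m.+2 z ->
  (forall p, (p < m.+1)%N -> cdot (q p) z = 0) -> z = cdot (q m.+1) z *: q m.+1.
Proof.
move=> mk zs H; rewrite {1}(expand _ zs) // big_ord_recr /= big1 ?add0r //.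
by move=> i _; rewrite H ?scale0r // ltn_ord.
Qed.

Lemma coef_o m (F : 'I_m -> C) (p : 'I_m) : (m <= k.+1)%N ->
  cdot (q p) (\sum_(l < m) F l *: q l) = F p.
Proof.
move=> mk; have pk : (p <= k)%N by rewrite -ltnS (leq_trans (ltn_ord p)).
rewrite cdot_sumr (bigD1 p) //= cdotZr qon // eqxx mulr1 big1 ?addr0 //.
move=> l lp; rewrite cdotZr qon; last by rewrite -ltnS (leq_trans (ltn_ord l)).
  by rewrite (_ : (p == l :> nat) = false) ?mulr0 //; apply/eqP => e; move/eqP: lp; apply; exact: val_inj.
by [].
Qed.

Lemma cdot_qAQ m (y : 'cV[C]_m.+1) (p : 'I_m.+1) : (m < k)%N ->
  cdot (q p) (A *m (Qmx q m.+1 *m y)) = (Hmx h m.+1 *m y) p 0.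
Proof.
move=> mk; rewrite Qmx_mul mulmx_sumr cdot_sumr !mxE; apply: eq_bigr => l _.
rewrite -scalemxAr cdotZr cdot_qAq ?mxE 1?mulrC //.
  by rewrite -ltnS (leq_trans (ltn_ord p)) // ltnS ltnW.
exact: leq_trans (ltn_ord l) mk.
Qed.

Lemma H_unit m : (m < k)%N -> g m.+1 m.+1 != 0 -> Hmx h m.+1 \in unitmx.
Proof.
move=> mk gn0; rewrite unitmxE unitfE; apply/negP => d0.
rewrite -det_tr in d0; case/det0P: d0 => v vn0 vH.
set y := v^T.
have Hy : Hmx h m.+1 *m y = 0 by rewrite /y -[Hmx _ _]trmxK -trmx_mul vH trmx0.
set w := A *m (Qmx q m.+1 *m y).
have wz : forall p, (p < m.+1)%N -> cdot (q p) w = 0.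
  by move=> p pm; rewrite (cdot_qAQ y (Ordinal pm)) // Hy mxE.
have wspan : inspan m.+2 w by apply: A_span => //; exact: Qmx_inspan.
have ew := onedim mk wspan wz.
have : cdot (V m.+1) w = 0 by apply: V_orthA => //; exact: Qmx_inspan.
rewrite {1}ew cdotZr V_q // => /eqP; rewrite mulf_eq0 (negbTE gn0) orbF => /eqP c0.
have w0 : w = 0 by rewrite ew c0 scale0r.
have Qy0 : Qmx q m.+1 *m y = 0.
  by rewrite -(mulKmx Aunit (Qmx q m.+1 *m y)) -/w w0 mulmx0.
have y0 : y = 0.
  apply/matrixP => l j; rewrite (ord1 j) [RHS]mxE.
  have := coef_o (fun l => y l 0) l (ltnW mk : (m.+1 <= k.+1)%N).
  by rewrite -Qmx_mul Qy0 cdot0r => <-.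
by move/eqP: vn0; apply; rewrite -[v]trmxK -/y y0 trmx0.
Qed.

Lemma fom_res m : (m < k)%N -> g m.+1 m.+1 != 0 ->
  cmod (g m.+1 m.+1) * vnorm (b - A *m fom_iterate b q h m.+1) = beta.
Proof.
move=> mk gn0; have Hu := H_unit mk gn0.
set y := invmx (Hmx h m.+1) *m e1 R m.+1.
have Hy : Hmx h m.+1 *m y = e1 R m.+1 by rewrite /y mulKVmx.
rewrite /fom_iterate -/y -scalemxAr.
set rF := b - _.
have rs : inspan m.+2 rF.
  apply: inspanD; first exact: (inspan_mono _ b_span).
  by apply/inspanN/inspanZ/A_span => //; exact: Qmx_inspan.
have rz : forall p, (p < m.+1)%N -> cdot (q p) rF = 0.
  move=> p pm; rewrite cdotBr cdotZr (cdot_qAQ y (Ordinal pm)) // Hy mxE.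
  rewrite {1}b_q0 cdotZr qon //=; last by rewrite -ltnS (leq_trans pm) // ltnS ltnW.
  by rewrite eq_sym subrr.
have er := onedim mk rs rz.
set c := cdot (q m.+1) rF in er.
have cg : c * g m.+1 m.+1 = (beta%:C)%C.
  rewrite -(V_q mk (leqnn m.+1)) -cdotZr -er cdotBr V_b // cdotZr V_orthA //.
    by rewrite mulr0 subr0.
  exact: Qmx_inspan.
rewrite er vnormZ vnorm_q // mulr1 -cmodM mulrC cg cmodR ger0_norm //.
exact: vnorm_ge0.
Qed.

Lemma gmres_bound xG : is_gmres_iterate A b k xG ->
  beta <= vnorm (V k) * vnorm (b - A *m xG).
Proof.
case=> xk _; have xs := krylov_inspan (leqnn k) xk.
have := cs (V k) (b - A *m xG).
by rewrite cdotBr V_b // V_orthA // subr0 cmodR ger0_norm // vnorm_ge0.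
Qed.

Lemma fom_key (j : 'I_k.+1) : g k j != 0 -> exists r,
  fom_err A b q h j = (vnorm (invmx A *m r))%:E /\ cmod (g k j) * vnorm r = beta.
Proof.
case: j => [[|m] mk] /= gn0.
  by exists b; rewrite /fom_err /= g0 cmodR normr1 mul1r.
have mk' : (m < k)%N by [].
have ge : g k m.+1 = g m.+1 m.+1 by apply: g_stable.
rewrite ge in gn0 *.
exists (b - A *m fom_iterate b q h m.+1); split; last exact: fom_res.
by rewrite /fom_err /= H_unit // mulmxBr mulKmx.
Qed.

Lemma main_sec xG : is_gmres_iterate A b k xG ->
  (\big[Order.min/+oo%E]_(j < k.+1) fom_err A b q h j
     <= (Num.sqrt (k.+1)%:R * kappa A * vnorm (invmx A *m b - xG))%:E)%E.
Proof.
move=> gm.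
pose j0 := [arg max_(j > (ord0 : 'I_k.+1)) cmod (g k j)]%O.
have jmax : forall j : 'I_k.+1, cmod (g k j) <= cmod (g k j0).
  rewrite /j0; case: (arg_maxP (fun j : 'I_k.+1 => cmod (g k j)) (isT : xpredT ord0)).
  by move=> i _ H j; apply: H.
have g1 : 1 <= cmod (g k j0) by have := jmax ord0; rewrite /= g0 cmodR normr1.
have gpos : 0 < cmod (g k j0) by apply: lt_le_trans g1; exact: ltr01.
have gn0 : g k j0 != 0 by rewrite -cmod_eq0 gt_eqF.
have [r [Er er]] := fom_key gn0.
apply: le_trans (bigmin_le _ j0 _) _; rewrite Er lee_fin.
set e := vnorm (invmx A *m b - xG).
set c := cmod (g k j0) in g1 gpos er jmax *.
have hA : vnorm (b - A *m xG) <= opnorm A * e.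
  by have := opnorm_ub A (invmx A *m b - xG); rewrite mulmxBr mulKVmx.
have hG := gmres_bound gm; rewrite vnorm_V // in hG.
have s0 : 0 <= Num.sqrt ((k.+1)%:R : R) by exact: sqrtr_ge0.
have hS : Num.sqrt (\sum_(i < k.+1) cmod (g k i) ^+ 2) <= Num.sqrt ((k.+1)%:R : R) * c.
  have -> : Num.sqrt ((k.+1)%:R : R) * c = Num.sqrt ((k.+1)%:R * c ^+ 2).
    by rewrite sqrtrM ?ler0n // sqrtr_sqr ger0_norm // ltW.
  rewrite ler_sqrt; last by rewrite mulr_ge0 ?ler0n ?sqr_ge0.
  have -> : (k.+1)%:R * c ^+ 2 = \sum_(i < k.+1) c ^+ 2.
    by rewrite sumr_const card_ord mulr_natl.
  apply: ler_sum => i _; rewrite ler_sqr ?nnegrE ?cmod_ge0 //; exact: ltW.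
have hr : vnorm r <= Num.sqrt ((k.+1)%:R : R) * vnorm (b - A *m xG).
  rewrite -(ler_pM2l gpos) er; apply: le_trans hG _.
  have -> : c * (Num.sqrt ((k.+1)%:R : R) * vnorm (b - A *m xG)) =
            (Num.sqrt ((k.+1)%:R : R) * c) * vnorm (b - A *m xG) by ring.
  by apply: ler_wpM2r => //; exact: vnorm_ge0.
have o1 := opnorm_ub (invmx A) r.
have oi0 : 0 <= opnorm (invmx A) := opnorm_ge0 _ (vnorm_q (leq0n k)).
have H : vnorm r <= Num.sqrt ((k.+1)%:R : R) * (opnorm A * e).
  exact: le_trans hr (ler_wpM2l s0 hA).
apply: le_trans o1 _; apply: le_trans (ler_wpM2l oi0 H) _.
rewrite /kappa le_eqVlt; apply/orP; left; apply/eqP; ring.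
Qed.

End Arn.


Theorem mainTheorem4 (R : realType) (n : nat) (A : 'M[R[i]]_n)
    (b : 'cV[R[i]]_n) (k : nat)
    (q : nat -> 'cV[R[i]]_n) (h : nat -> nat -> R[i]) (xG : 'cV[R[i]]_n) :
  A \in unitmx -> b != 0 -> (1 <= k)%N ->
  \rank (krylov_mx A b k.+1) = k.+1 ->
  arnoldi A b k q h ->
  is_gmres_iterate A b k xG ->
  (\big[Order.min/+oo%E]_(j < k.+1) fom_err A b q h j
     <= (Num.sqrt (k.+1)%:R * kappa A * vnorm (invmx A *m b - xG))%:E)%E.
Proof.
move=> Au _ _ _ arn gm; exact: (main_sec arn Au gm).
Qed.
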